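(* Let $\mathcal{SB}=\langle\mathcal{L},A,\to,\text{supp}\rangle$ be an SBAF and $S\subseteq Sent(A)$ a compatible set of sentences. Then for every $i\in\mathbb{N}$, $R^S_i(Init(S))\subseteq R^S_{i+1}(Init(S))$ and $R^S_{i+1}(Init(S))$ is admissible.
   Context: A language is a triple $\mathcal{L}=\langle L,\overline{\cdot},n\rangle$: $L$ is a nonempty set of sentences; $\overline{\cdot}$ assigns to each $s\in L$ a set $\overline{s}\subseteq L$ of sentences incompatible with $s$, and is symmetric; $n$ is a partial naming function assigning to an argument $a$ a sentence $n(a)\in L$ (if undefined, put $\overline{n(a)}:=\emptyset$), with $\overline{n(\langle\{t\},t\rangle)}=\emptyset$. An argument is a pair $a=\langle Prem(a),Conc(a)\rangle$ with $Prem(a)$ a nonempty finite subset of $L$ and $Conc(a)\in L$; $Sent(a):=Prem(a)\cup\{Conc(a)\}$, $Sent(E):=\bigcup_{a\in E}Sent(a)$. Argument $a$ attacks $b$ ($a\to b$) if $Conc(a)\in\overline{s}$ for some $s\in Sent(b)$ or $Conc(a)\in\overline{n(b)}$. An SBAF is $\langle\mathcal{L},A,\to,\text{supp}\rangle$ with $A$ a finite set of arguments. For $E\subseteq A$: $E$ defends $a\in A$ if for every $b\in A$ with $b\to a$ some element of $E$ attacks $b$; $E$ is conflict-free if no $a,b\in E$ with $a\to b$; admissible if conflict-free and defends all its elements. $S$ is compatible if no $s,t\in S$ with $s\in\overline t$. $Arg_s(S):=\{a\in A\mid Prem(a)\subseteq S\text{ and }\overline{n(a)}\cap S=\emptyset\}$;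 $R^S(E):=\{a\in A\mid a\in Arg_s(S)\text{ and }E\text{ defends }a\}$; $R^S_0(E):=E$, $R^S_{i+1}(E):=R^S(R^S_i(E))$. For compatible $S$, $Init(S)$ is the largest admissible subset of $\{a\in A\mid Sent(a)\subseteq S\text{ and }\overline{n(a)}\cap S=\emptyset\}$ (this exists and is unique). *)

(* Defs.v *)
From mathcomp Require Import all_boot finmap.
Set Implicit Arguments. Unset Strict Implicit. Unset Printing Implicit Defensive.
Local Open Scope fset_scope.

Definition Arg (T : choiceType) := ({fset T} * T)%type.
Definition Prem {T : choiceType} (a : Arg T) : {fset T} := a.1.
Definition Conc {T : choiceType} (a : Arg T) : T := a.2.
Definition Sent {T : choiceType} (a : Arg T) (t : T) : Prop :=
  t \in Prem a \/ t = Conc a.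

(* A language: sentences are the elements of T (nonempty);
   [contrary s t] means t ∈ overline(s); [name] is the partial naming function. *)
Record language (T : choiceType) := Language {
  L_nonempty : inhabited T;
  contrary : T -> T -> Prop;
  contrary_sym : forall s t, contrary s t -> contrary t s;
  name : Arg T -> option T;
  name_singleton : forall t u, name ([fset t], t) = Some u ->
                               forall v, ~ contrary u v
}.

Definition namebar {T : choiceType} (Lg : language T) (a : Arg T) (t : T) : Prop :=
  match name Lg a with Some u => contrary Lg u t | None => False end.

(* An SBAF: language, finite set of arguments (with nonempty premises),
   attack relation induced by the language (see [attacks]), support relation. *)
Record SBAF (T : choiceType) := MkSBAF {
  lang : language T;
  args : {fset Arg T};
  args_prem_nonempty : forall a, a \in args -> Prem a != fset0;
  supp : Arg T -> Arg T -> Prop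
}.

Section Defs.
Context {T : choiceType} (SB : SBAF T).
Let Lg := lang SB.
Let A := args SB.

Definition attacks (a b : Arg T) : Prop :=
  (exists s, Sent b s /\ contrary Lg s (Conc a)) \/ namebar Lg b (Conc a).

Definition defends (E : Arg T -> Prop) (a : Arg T) : Prop :=
  forall b, b \in A -> attacks b a -> exists c, E c /\ attacks c b.
Definition conflict_free (E : Arg T -> Prop) : Prop :=
  forall a b, E a -> E b -> ~ attacks a b.
Definition admissible (E : Arg T -> Prop) : Prop :=
  conflict_free E /\ forall a, E a -> defends E a.

Definition compatible (S : T -> Prop) : Prop :=
  forall s t, S s -> S t -> ~ contrary Lg t s.

Definition SentA (t : T) : Prop := exists2 a, a \in A & Sent a t.

Definition Arg_s (S : T -> Prop) (a : Arg T) : Prop :=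
  a \in A /\ (forall p, p \in Prem a -> S p) /\ (forall t, namebar Lg a t -> ~ S t).

Definition RS (S : T -> Prop) (E : Arg T -> Prop) : Arg T -> Prop :=
  fun a => Arg_s S a /\ defends E a.

Definition RSi (S : T -> Prop) (i : nat) (E : Arg T -> Prop) : Arg T -> Prop :=
  iter i (RS S) E.

Definition init_cand (S : T -> Prop) (a : Arg T) : Prop :=
  a \in A /\ (forall t, Sent a t -> S t) /\ (forall t, namebar Lg a t -> ~ S t).

(* Init(S): the largest admissible subset of init_cand S, realised as the
   union of all admissible subsets of it (which is the largest one whenever
   a largest one exists, as asserted in the paper for compatible S). *)
Definition Init (S : T -> Prop) : Arg T -> Prop :=
  fun a => exists E, [/\ admissible E, (forall b, E b -> init_cand S b) & E a].

End Defs.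

(* Main.v *)
Require Import Defs.
From mathcomp Require Import all_boot finmap.

Section Aux.
Variables (T : choiceType) (SB : SBAF T) (S : T -> Prop).

Lemma defends_mono (E F : Arg T -> Prop) a :
  (forall x, E x -> F x) -> defends SB E a -> defends SB F a.
Proof.
move=> EF H b Hb Hab; have [c [Ec Hc]] := H b Hb Hab; exists c; split=> //.
exact: EF.
Qed.

Lemma RS_mono (E F : Arg T -> Prop) a :
  (forall x, E x -> F x) -> RS SB S E a -> RS SB S F a.
Proof. by move=> EF [H1 H2]; split=> //; apply: defends_mono EF H2. Qed.

Lemma Init_cf : compatible SB S -> conflict_free SB (Init SB S).
Proof.
move=> comp a b [E [_ HE Ea]] [F [_ HF Fb]] Hab.
have [_ [Sa _]] := HE a Ea; have [_ [Sb Nb]] := HF b Fb.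
case: Hab => [[s [Hs Hc]]|Hn].
- apply: (comp (Conc a) s); [apply: Sa; by right | exact: Sb | exact: Hc].
- apply: (Nb _ Hn); apply: Sa; by right.
Qed.

Lemma Init_sub : forall a, Init SB S a -> RS SB S (Init SB S) a.
Proof.
move=> a [E [Eadm HE Ea]]; have [_ Edef] := Eadm; have [HA [HS HN]] := HE a Ea.
split.
- split=> //; split=> // p Hp; apply: HS; by left.
- apply: defends_mono (Edef a Ea) => x Ex; by exists E; split.
Qed.

Lemma step (E : Arg T -> Prop) :
  (forall x, E x -> x \in args SB) -> conflict_free SB E ->
  (forall x, E x -> RS SB S E x) ->
  [/\ (forall x, RS SB S E x -> x \in args SB),
      conflict_free SB (RS SB S E) &
      (forall x, RS SB S E x -> RS SB S (RS SB S E) x)].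
Proof.
move=> EA Ecf Einc; split.
- by move=> x [[H _] _].
- move=> a b [[Aa _] Da] [_ Db] Hab.
  have [c [Ec Hca]] := Db a Aa Hab.
  have [d [Ed Hdc]] := Da c (EA c Ec) Hca.
  exact: (Ecf d c Ed Ec Hdc).
- by move=> x; apply: RS_mono.
Qed.

End Aux.

Theorem mainTheorem6 (T : choiceType) (SB : SBAF T) (S : T -> Prop) :
  (forall t, S t -> SentA SB t) ->
  compatible SB S ->
  forall i : nat,
    (forall a, RSi SB S i (Init SB S) a -> RSi SB S i.+1 (Init SB S) a) /\
    admissible SB (RSi SB S i.+1 (Init SB S)).
Proof.
move=> _ comp i.
have inv : forall n, [/\ (forall x, RSi SB S n (Init SB S) x -> x \in args SB),
      conflict_free SB (RSi SB S n (Init SB S)) &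
      (forall x, RSi SB S n (Init SB S) x -> RSi SB S n.+1 (Init SB S) x)].
  elim=> [|n [H1 H2 H3]].
  - split.
    + by move=> x [E [_ HE Ex]]; case: (HE x Ex).
    + exact: Init_cf.
    + exact: Init_sub.
  - have := @step T SB S _ H1 H2 H3; rewrite /RSi /=; exact.
have [H1 H2 H3] := inv i; have [_ H2' H3'] := inv i.+1.
split=> //; split=> // a [_ Da].
apply: defends_mono Da; exact: H3.
Qed.
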